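(* Let $p,q$ be positive integers, $m$ a non-negative integer and $s$ a positive integer. If there is an odd integer $a_1$ with $\frac12 G_{2^m s}=2a_1+1$, then $$\tfrac12 G_{2^{m+1}s}\equiv 1\pmod{2^{e_{g,0}}}\quad\text{and}\quad \tfrac12 G_{2^{m+1}s}\not\equiv 1\pmod{2^{e_{g,0}+1}},$$ where $e_{g,0}=3+\max\{x : 2^x\mid (a_1+1)\}$.
   Context: $A=pq+2$, $B=\sqrt{A^2-4}$, $G_n=\left(\frac{A+B}{2}\right)^n+\left(\frac{A-B}{2}\right)^n$ (an integer). *)

(* Defs.v *)
From Stdlib Require Import Reals ZArith Lra Lia.
Open Scope R_scope.

Definition Aval (p q : nat) : R := INR p * INR q + 2.
Definition Bval (p q : nat) : R := sqrt (Aval p q ^ 2 - 4).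

Definition G (p q : nat) (n : nat) : R :=
  ((Aval p q + Bval p q) / 2) ^ n + ((Aval p q - Bval p q) / 2) ^ n.

(* Main.v *)
Require Import Defs.
From Stdlib Require Import Reals ZArith Lra Lia.
Open Scope R_scope.

Lemma G_double (p q n : nat) : G p q (2 * n) = G p q n ^ 2 - 2.
Proof.
  unfold G.
  set (a := Aval p q). set (b := Bval p q).
  assert (Ha : 2 <= a).
  { unfold a, Aval. assert (0 <= INR p) by apply pos_INR.
    assert (0 <= INR q) by apply pos_INR. nra. }
  assert (Hb : b * b = a ^ 2 - 4).
  { unfold b, Bval. fold a. apply sqrt_sqrt. nra. }
  assert (Hab : (a + b) / 2 * ((a - b) / 2) = 1) by nra.
  rewrite !pow_mult.
  assert (E : forall u v : R, u * v = 1 -> (u ^ 2) ^ n + (v ^ 2) ^ n = (u ^ n + v ^ n) ^ 2 - 2).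
  { intros u v Huv. rewrite <- !pow_mult.
    assert (u ^ n * v ^ n = 1) by (rewrite <- Rpow_mult_distr, Huv; apply pow1).
    replace (2 * n)%nat with (n + n)%nat by lia. rewrite !pow_add. nra. }
  rewrite <- !pow_mult. replace (n*2)%nat with (2*n)%nat by lia.
  rewrite pow_mult, (pow_mult _ 2 n). apply E; auto.
Qed.

Theorem lemma5 (p q m s : nat) :
  (0 < p)%nat -> (0 < q)%nat -> (0 < s)%nat ->
  forall a1 : Z, Z.odd a1 = true ->
  G p q (2 ^ m * s) / 2 = 2 * IZR a1 + 1 ->
  forall x : nat,
    (* x = max { x : 2^x | a1 + 1 } *)
    (2 ^ Z.of_nat x | a1 + 1)%Z ->
    (forall y : nat, (2 ^ Z.of_nat y | a1 + 1)%Z -> (y <= x)%nat) ->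
  let e := (3 + x)%nat in
  (exists k : Z, G p q (2 ^ (m + 1) * s) / 2 = 1 + IZR (2 ^ Z.of_nat e) * IZR k) /\
  ~ (exists k : Z, G p q (2 ^ (m + 1) * s) / 2 = 1 + IZR (2 ^ Z.of_nat (e + 1)) * IZR k).
Proof.
  intros Hp Hq Hs a1 Hodd HG x [c Hc] Hmax e.
  assert (H2 : G p q (2 ^ (m + 1) * s) / 2 = IZR (1 + 8 * a1 * (a1 + 1))).
  { replace (2 ^ (m + 1) * s)%nat with (2 * (2 ^ m * s))%nat
      by (rewrite Nat.pow_add_r; simpl; lia).
    rewrite G_double.
    assert (G p q (2 ^ m * s) = 2 * (2 * IZR a1 + 1)) by (rewrite <- HG; field).
    rewrite H, plus_IZR, !mult_IZR, plus_IZR. simpl. field. }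
  assert (Hpx : (2 ^ Z.of_nat x > 0)%Z) by (apply Z.lt_gt, Z.pow_pos_nonneg; lia).
  assert (Hcodd : Z.odd c = true).
  { destruct (Z.odd c) eqn:Ec; auto. exfalso.
    assert (Hce : Z.even c = true) by (rewrite <- Z.negb_odd, Ec; auto).
    apply Z.even_spec in Hce. destruct Hce as [d Hd].
    assert (Hdiv : (2 ^ Z.of_nat (S x) | a1 + 1)%Z).
    { exists d. rewrite Hc, Hd, Nat2Z.inj_succ, Z.pow_succ_r by lia. ring. }
    apply Hmax in Hdiv. lia. }
  unfold e. split.
  - exists (a1 * c)%Z. rewrite H2, <- mult_IZR, <- plus_IZR. f_equal.
    rewrite Nat2Z.inj_add, Z.pow_add_r by lia. rewrite Hc. change (2 ^ Z.of_nat 3)%Z with 8%Z. ring.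
  - intros [k Hk]. rewrite H2, <- mult_IZR, <- plus_IZR in Hk.
    apply eq_IZR in Hk.
    rewrite !Nat2Z.inj_add, !Z.pow_add_r in Hk by lia. rewrite Hc in Hk.
    change (2 ^ Z.of_nat 3)%Z with 8%Z in Hk. change (2 ^ Z.of_nat 1)%Z with 2%Z in Hk.
    assert (Hk2 : ((a1 * c) * 2 ^ Z.of_nat x = (2 * k) * 2 ^ Z.of_nat x)%Z) by lia.
    apply Z.mul_cancel_r in Hk2; [|lia].
    assert (Z.odd (a1 * c) = Z.odd (2 * k)) by now rewrite Hk2.
    rewrite Z.odd_mul, Hodd, Hcodd, Z.odd_mul in H. simpl in H. discriminate.
Qed.
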